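(* Let $\mathsf{M}$ be the subspace of $\ell_1$ with underlying set $\{x \in \prod_{i\in\mathbb{N}} M_i : \sum_i |x(i)|<\infty\}$, where $M_i = \{ j\cdot 2^{-i} \mid j \in \{0,\dots,2^i\}\}$. Then the Polish space $\mathsf{M}$ is a retract (in QCB) of $\mathsf{2}^{\mathbb{N}\times\mathbb{F}}$ and of $\mathbb{N}^{\mathbb{N}^{\mathbb{N}}}$.
   Context: $\ell_1$ carries the metric $\|x-y\|_1=\sum_i|x(i)-y(i)|$. QCB is the cartesian closed category of topological quotients of countably based spaces; exponentials $Y^X$ are the sets of continuous maps with the sequentialisation of the compact-open topology. $\mathbb{N}$ is discrete, $\mathbb{N}^{\mathbb{N}}$ is Baire space, $\mathsf{2}=\{\mathtt{0},\mathtt{1}\}$ discrete, and the countable fan $\mathbb{F}$ is $\mathbb{N}^2\cup\{(\infty,\infty)\}$ with metric $d((a,b),(\infty,\infty))=2^{-a}$, $d((a,b),(a',b'))=\max\{2^{-a},2^{-a'}\}$ for distinct points of $\mathbb{N}^2$. $X$ is a retract of $Y$ if there are continuous $e\colon X\to Y$, $r\colon Y\to X$ with $r\circ e=\mathrm{id}_X$. *)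

(* Defs.v *)
From HB Require Import structures.
From mathcomp Require Import all_boot all_order all_algebra.
From mathcomp Require Import all_classical all_reals all_analysis.
From mathcomp Require Import Rstruct Rstruct_topology.
Notation R := Rdefinitions.R (only parsing).

Set Implicit Arguments.
Unset Strict Implicit.
Unset Printing Implicit Defensive.
Import Order.TTheory GRing.Theory Num.Theory.
Local Open Scope classical_set_scope.
Local Open Scope ring_scope.

Definition metric_open {T : Type} (d : T -> T -> R) : set_system T :=
  [set A | forall x, A x -> exists2 e : R, 0 < e & [set y | d x y < e] `<=` A].

Lemma metric_openT {T : Type} (d : T -> T -> R) : metric_open d setT.
Proof. by move=> x _; exists 1 => //. Qed.

Lemma metric_openI {T : Type} (d : T -> T -> R) : setI_closed (metric_open d).
Proof.
move=> A B oA oB x [Ax Bx].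
have [e1 e10 h1] := oA x Ax; have [e2 e20 h2] := oB x Bx.
exists (Num.min e1 e2); first by rewrite lt_min e10 e20.
move=> y /= dy; split.
- by apply: h1 => /=; apply: (lt_le_trans dy); rewrite ge_min lexx.
- by apply: h2 => /=; apply: (lt_le_trans dy); rewrite ge_min lexx orbT.
Qed.

Lemma metric_open_bigU {T : Type} (d : T -> T -> R) (I : Type) (f : I -> set T) :
  (forall i, metric_open d (f i)) -> metric_open d (\bigcup_i f i).
Proof.
move=> hf x [i _ fxi]; have [e e0 h] := hf i x fxi.
by exists e => // y dy; exists i => //; apply: h.
Qed.

Definition seq_open (T : topologicalType) : set_system T :=
  [set A | forall x, A x -> forall u : nat -> T, u @ \oo --> x ->
     \forall n \near \oo, A (u n)].
Arguments seq_open : clear implicits.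

Lemma seq_openT (T : topologicalType) : seq_open T setT.
Proof. by move=> x _ u _; apply: nearW. Qed.

Lemma seq_openI (T : topologicalType) : setI_closed (seq_open T).
Proof.
move=> A B oA oB x [Ax Bx] u ux.
have hA := oA x Ax u ux; have hB := oB x Bx u ux.
by near=> n; split; [near: n; exact: hA | near: n; exact: hB].
Unshelve. all: by end_near.
Qed.

Lemma seq_open_bigU (T : topologicalType) (I : Type) (f : I -> set T) :
  (forall i, seq_open T (f i)) -> seq_open T (\bigcup_i f i).
Proof.
move=> hf x [i _ fxi] u ux; have h := hf i x fxi u ux.
by near=> n; exists i => //; near: n; exact: h.
Unshelve. all: by end_near.
Qed.

Definition seqtop (T : topologicalType) : Type := T.
HB.instance Definition _ (T : topologicalType) := Choice.on (seqtop T).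
HB.instance Definition _ (T : topologicalType) :=
  isOpenTopological.Build (seqtop T) (@seq_openT T) (@seq_openI T)
    (@seq_open_bigU T).

(* QCB exponential Y^X: the set of continuous maps X -> Y, with the    *)
(* sequentialization of the compact-open topology.                     *)
Definition cont_maps (X Y : topologicalType) : set (@compact_open X Y) :=
  [set f | continuous (f : X -> Y)].
Arguments cont_maps : clear implicits.
Definition qcb_exp (X Y : topologicalType) : Type :=
  seqtop (set_type (cont_maps X Y)).

Definition Mi (i : nat) : set R :=
  [set r | exists j : nat, (j <= 2 ^ i)%N /\ r = j%:R / 2%:R ^+ i].

Definition l1 : set (nat -> R) := [set x : nat -> R | cvgn (series (fun i => `|x i|))].

Definition Mset : set (nat -> R) := [set x | (forall i, Mi i (x i)) /\ l1 x].

Definition l1dist (x y : nat -> R) : R := limn (series (fun i => `|x i - y i|)).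

Definition Mspace : Type := set_type Mset.
HB.instance Definition _ := Choice.on Mspace.
Definition Mdist (x y : Mspace) : R := l1dist (set_val x) (set_val y).
HB.instance Definition _ :=
  isOpenTopological.Build Mspace (metric_openT Mdist) (@metric_openI _ Mdist)
    (@metric_open_bigU _ Mdist).

(* The countable fan F = N^2 u {(oo,oo)}; None stands for (oo,oo).     *)
Definition Fan : Type := option (nat * nat).
HB.instance Definition _ := Choice.on Fan.
Definition pow2m (a : nat) : R := (2%:R ^+ a)^-1.
Definition Fdist (p q : Fan) : R :=
  match p, q with
  | None, None => 0
  | Some (a, _), None => pow2m a
  | None, Some (a, _) => pow2m a
  | Some (a, b), Some (a', b') =>
      if (a, b) == (a', b') then 0 else Num.max (pow2m a) (pow2m a')
  end.
HB.instance Definition _ :=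
  isOpenTopological.Build Fan (metric_openT Fdist) (@metric_openI _ Fdist)
    (@metric_open_bigU _ Fdist).

Definition BaireSpace : Type := {ptws nat -> nat}.

Definition retract (X Y : topologicalType) : Prop :=
  exists (e : X -> Y) (r : Y -> X),
    [/\ continuous e, continuous r & forall x, r (e x) = x].

(* Main.v *)
Require Import Defs.
From HB Require Import structures.
From mathcomp Require Import all_boot all_order all_algebra.
From mathcomp Require Import all_classical all_reals all_analysis.
From mathcomp Require Import Rstruct Rstruct_topology.
From mathcomp Require Import ring lra zify.
Set Implicit Arguments.
Unset Strict Implicit.
Unset Printing Implicit Defensive.
Import Order.TTheory GRing.Theory Num.Theory.
Local Open Scope classical_set_scope.
Local Open Scope ring_scope.
Definition psum (u : nat -> R) (a b : nat) : R := \sum_(a <= k < b) u k.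

Lemma seriesP (u : nat -> R) n : series u n = psum u 0 n.
Proof. by []. Qed.

Lemma psum_ge0 (u : nat -> R) a b : (forall k, 0 <= u k) -> 0 <= psum u a b.
Proof. by move=> h; rewrite /psum; apply: sumr_ge0 => i _. Qed.

Lemma psum_split (u : nat -> R) a m b : (a <= m <= b)%N ->
  psum u a b = psum u a m + psum u m b.
Proof. by move=> /andP[h1 h2]; rewrite /psum (@big_cat_nat _ _ _ m). Qed.

Lemma psum1 (u : nat -> R) i : psum u i i.+1 = u i.
Proof. by rewrite /psum big_nat1. Qed.

Lemma psum_mono (u : nat -> R) a b b' : (forall k, 0 <= u k) -> (b <= b')%N ->
  psum u a b <= psum u a b'.
Proof.
move=> h hb; case: (leqP a b) => hab.
  rewrite (@psum_split u a b b'); last by rewrite hab hb.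
  by rewrite lerDl psum_ge0.
by rewrite /psum big_geq ?(ltnW hab) // psum_ge0.
Qed.

Lemma psum_monol (u : nat -> R) a a' b : (forall k, 0 <= u k) -> (a <= a')%N ->
  psum u a' b <= psum u a b.
Proof.
move=> h ha; case: (leqP a' b) => hab.
  rewrite (@psum_split u a a' b); last by rewrite ha hab.
  by rewrite lerDr psum_ge0.
by rewrite /psum [X in X <= _]big_geq ?(ltnW hab) // psum_ge0.
Qed.

Lemma series_nd (u : nat -> R) : (forall k, 0 <= u k) ->
  {homo series u : n m / (n <= m)%N >-> n <= m}.
Proof. by move=> h n m nm; rewrite !seriesP; apply: psum_mono. Qed.

Lemma series_cvg_ub (u : nat -> R) M : (forall k, 0 <= u k) ->
  (forall n, psum u 0 n <= M) -> cvgn (series u).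
Proof.
move=> h hM; apply: nondecreasing_is_cvgn; first exact: series_nd.
by exists M => _ [n _ <-]; rewrite seriesP.
Qed.

Lemma psum_le_lim (u : nat -> R) n : (forall k, 0 <= u k) ->
  cvgn (series u) -> psum u 0 n <= limn (series u).
Proof. by move=> h c; rewrite -seriesP; apply: nondecreasing_cvgn_le => //; exact: series_nd. Qed.

Lemma lim_le_ub (u : nat -> R) M : cvgn (series u) ->
  (forall n, psum u 0 n <= M) -> limn (series u) <= M.
Proof. by move=> c h; apply: limr_le => //; apply: nearW => n; rewrite seriesP. Qed.

Lemma tail_small (u : nat -> R) (d : R) : (forall k, 0 <= u k) ->
  cvgn (series u) -> 0 < d -> exists a0, forall b, psum u a0 b < d.
Proof.
move=> h c d0.
have hc : series u @ \oo --> limn (series u) by exact: c.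
have [a0 _ ha0] := (proj1 (@cvgrPdist_lt _ R^o _ \oo _ (series u) (limn (series u))) hc) d d0.
exists a0 => b; case: (leqP a0 b) => hab; last first.
  by rewrite /psum big_geq ?(ltnW hab).
have := ha0 a0 (leqnn a0); rewrite /= => h1.
have h2 := psum_le_lim b h c.
rewrite (@psum_split u 0 a0 b) ?hab // -seriesP in h2.
have h3 : series u a0 <= limn (series u) by rewrite seriesP; exact: psum_le_lim.
rewrite ger0_norm ?subr_ge0 // in h1.
lra.
Qed.

Definition adiff (x y : nat -> R) := fun i => `|x i - y i|.

Lemma psum_adiff_le x y a b :
  psum (adiff x y) a b <= psum (fun i => `|x i|) a b + psum (fun i => `|y i|) a b.
Proof.
rewrite /psum -big_split /=; apply: ler_sum => i _; exact: ler_normB.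
Qed.

Lemma psum_adiff_tri x y z a b :
  psum (adiff x z) a b <= psum (adiff x y) a b + psum (adiff y z) a b.
Proof.
rewrite /psum -big_split /=; apply: ler_sum => i _.
rewrite /adiff; have -> : x i - z i = (x i - y i) + (y i - z i) by ring.
exact: ler_normD.
Qed.

Lemma adiff_ge0 x y k : 0 <= adiff x y k.
Proof. exact: normr_ge0. Qed.

Lemma abs_ge0' (x : nat -> R) k : 0 <= `|x k|.
Proof. exact: normr_ge0. Qed.

Lemma l1_diff x y : l1 x -> l1 y -> cvgn (series (adiff x y)).
Proof.
move=> hx hy; apply: (@series_cvg_ub _ (limn (series (fun i => `|x i|)) +
   limn (series (fun i => `|y i|)))); first exact: adiff_ge0.
move=> n; apply: (le_trans (psum_adiff_le _ _ _ _)).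
by apply: lerD; apply: psum_le_lim => // k; exact: normr_ge0.
Qed.

Lemma l1distE x y : l1dist x y = limn (series (adiff x y)).
Proof. by []. Qed.

Lemma l1dist_tri x y z : l1 x -> l1 y -> l1 z ->
  l1dist x z <= l1dist x y + l1dist y z.
Proof.
move=> hx hy hz; rewrite !l1distE; apply: lim_le_ub; first exact: l1_diff.
move=> n; apply: (le_trans (psum_adiff_tri x y z 0 n)).
by apply: lerD; apply: psum_le_lim => //; [exact: adiff_ge0|exact: l1_diff|
  exact: adiff_ge0|exact: l1_diff].
Qed.

Lemma psum_adiff_le_dist x y a b : l1 x -> l1 y ->
  psum (adiff x y) a b <= l1dist x y.
Proof.
move=> hx hy; apply: (@le_trans _ _ (psum (adiff x y) 0 b)).
  by apply: psum_monol => //; exact: adiff_ge0.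
by apply: psum_le_lim; [exact: adiff_ge0|exact: l1_diff].
Qed.

Lemma coord_le_dist x y i : l1 x -> l1 y -> `|x i - y i| <= l1dist x y.
Proof.
move=> hx hy; apply: (le_trans _ (psum_adiff_le_dist i i.+1 hx hy)).
by rewrite /psum big_nat1.
Qed.

Lemma window_le x y a b : l1 x -> l1 y ->
  psum x a b <= psum y a b + l1dist x y.
Proof.
move=> hx hy; rewrite -lerBlDl; apply: (le_trans _ (psum_adiff_le_dist a b hx hy)).
rewrite /psum -sumrB; apply: ler_sum => i _; rewrite /adiff; exact: ler_norm.
Qed.

Lemma l1dist_split x y A B : l1 x -> l1 y -> (forall l, (l < A)%N -> x l = y l) ->
  (forall b, psum (fun i => `|x i|) A b <= B) ->
  (forall b, psum (fun i => `|y i|) A b <= B) -> l1dist x y <= B + B.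
Proof.
move=> hx hy heq hbx hby; rewrite l1distE; apply: lim_le_ub; first exact: l1_diff.
move=> n; case: (leqP A n) => hAn.
  rewrite (@psum_split _ 0 A n) ?hAn //.
  have -> : psum (adiff x y) 0 A = 0.
    rewrite /psum big_nat; apply: big1 => i /andP[_ hi].
    by rewrite /adiff heq // subrr normr0.
  rewrite add0r; apply: (le_trans (psum_adiff_le _ _ _ _)); exact: lerD.
have -> : psum (adiff x y) 0 n = 0.
  rewrite /psum big_nat; apply: big1 => i /andP[_ hi].
  by rewrite /adiff heq ?subrr ?normr0 // (ltn_trans hi hAn).
have := hbx A; have : 0 <= psum (fun i => `|x i|) A A by apply: psum_ge0 => k; exact: normr_ge0.
lra.
Qed.

Lemma pow2m_gt0 i : 0 < pow2m i.
Proof. by rewrite /pow2m invr_gt0 exprn_gt0. Qed.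

Lemma pow2mS i : pow2m i.+1 = pow2m i / 2.
Proof. by rewrite /pow2m exprS invfM mulrC. Qed.

Lemma pow2m_le i j : (i <= j)%N -> pow2m j <= pow2m i.
Proof.
move=> /subnK <-; elim: (j - i)%N => [|k IH]; first by rewrite add0n.
rewrite addSn pow2mS; apply: le_trans IH; have := pow2m_gt0 (k + i); lra.
Qed.

Lemma pow2m_small (e : R) : 0 < e -> exists m, pow2m m < e.
Proof.
move=> e0; have [n hn] : exists n : nat, e^-1 < n%:R.
  by exists (Num.Def.archi_bound e^-1); apply: unstable.ltr_bound.
exists n; rewrite /pow2m -(ltf_pV2 _ _) ?posrE ?exprn_gt0 ?invr_gt0 //.
rewrite invrK; apply: (lt_le_trans hn).
have : (n < 2 ^ n)%N by apply: ltn_expl.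
by rewrite -(ltr_nat R) natrX => /ltW.
Qed.

Lemma Mi_ge0 i r : Mi i r -> 0 <= r.
Proof. by move=> [j [_ ->]]; rewrite divr_ge0 // exprn_ge0. Qed.

Lemma Mi_le1 i r : Mi i r -> r <= 1.
Proof.
move=> [j [hj ->]]; rewrite ler_pdivrMr ?exprn_gt0 // mul1r.
by rewrite -natrX ler_nat.
Qed.

Lemma Mi0 i : Mi i 0.
Proof. by exists 0%N; rewrite mul0r. Qed.

Lemma Mi_sep i r s : Mi i r -> Mi i s -> `|r - s| < pow2m i -> r = s.
Proof.
move=> [j [_ ->]] [j' [_ ->]]; rewrite -mulrBl normrM /pow2m.
rewrite [`|(_ ^+ _)^-1|]ger0_norm ?invr_ge0 ?exprn_ge0 //.
rewrite gtr_pMl ?invr_gt0 ?exprn_gt0 // => h.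
suff -> : j = j' by [].
apply/eqP; apply: contraLR h => hne; rewrite -leNgt.
case: (ltngtP j j') hne => // hjj _.
  rewrite distrC -natrB ?(ltnW hjj) // normr_nat ler1n subn_gt0 //.
rewrite -natrB ?(ltnW hjj) // normr_nat ler1n subn_gt0 //.
Qed.

Lemma Mset_ge0 x i : Mset x -> 0 <= x i.
Proof. by move=> [h _]; exact: Mi_ge0 (h i). Qed.

Lemma Mset_abs x : Mset x -> (fun i => `|x i|) = x.
Proof. by move=> h; apply: funext => i; rewrite ger0_norm // Mset_ge0. Qed.

Lemma Mspace_Mset (x : Mspace) : Mset (set_val x).
Proof. exact: set_mem (valP x). Qed.

Lemma Mspace_l1 (x : Mspace) : l1 (set_val x).
Proof. by case: (Mspace_Mset x). Qed.

Lemma Mdist_tri (x y z : Mspace) : Mdist x z <= Mdist x y + Mdist y z.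
Proof. by apply: l1dist_tri; apply: Mspace_l1. Qed.

Lemma Mdist_xx (x : Mspace) : Mdist x x <= 0.
Proof.
rewrite /Mdist l1distE; apply: lim_le_ub; first by apply: l1_diff; exact: Mspace_l1.
move=> n; rewrite /psum big1 // => i _; by rewrite /adiff subrr normr0.
Qed.

Lemma Mball_open (x : Mspace) (e : R) : open [set y | Mdist x y < e].
Proof.
move=> y /= hy; exists (e - Mdist x y); first by rewrite subr_gt0.
move=> z /= hz; have := Mdist_tri x y z; lra.
Qed.

Lemma Mball_nbhs (x : Mspace) (e : R) : 0 < e -> nbhs x [set y | Mdist x y < e].
Proof.
move=> e0; apply: open_nbhs_nbhs; split; first exact: Mball_open.
by rewrite /=; have := Mdist_xx x; lra.
Qed.

Lemma Mopen_ball (x : Mspace) V : nbhs x V -> exists2 e : R, 0 < e & [set y | Mdist x y < e] `<=` V.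
Proof.
rewrite nbhsE => -[B [oB Bx] BV]; have [e e0 he] := oB x Bx.
by exists e => // y /he /BV.
Qed.

Lemma Mcvg (u : nat -> Mspace) x : u @ \oo --> x <->
  (forall e : R, 0 < e -> \forall n \near \oo, Mdist x (u n) < e).
Proof.
split=> [h e e0|h].
  by have := h _ (Mball_nbhs x e0).
move=> V /Mopen_ball [e e0 he]; have := h e e0.
by apply: filterS => n /he.
Qed.

Definition Ftail (a0 : nat) : set Fan :=
  [set q | match q with None => True | Some (a, _) => (a0 <= a)%N end].

Lemma Fdist_Some_ge a b q : q <> Some (a, b) -> pow2m a <= Fdist (Some (a, b)) q.
Proof.
case: q => [[a' b']|] hq //=; case: ifPn => [/eqP [ea eb]|_].
  by exfalso; apply: hq; rewrite ea eb.
by rewrite le_max lexx.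
Qed.

Lemma Fan_pt_open p : open [set (Some p : Fan)].
Proof.
move=> q /= ->; case: p => a b; exists (pow2m a); first exact: pow2m_gt0.
move=> q' /= h; apply: contrapT => hq; have := Fdist_Some_ge hq.
by rewrite leNgt h.
Qed.

Lemma Fan_tail_open a0 : open (Ftail a0).
Proof.
move=> q; case: q => [[a b] /= ha|_].
  exists (pow2m a); first exact: pow2m_gt0.
  move=> q' /= h; have [->|hq] := pselect (q' = Some (a, b)); first by [].
  by have := Fdist_Some_ge hq; rewrite leNgt h.
exists (pow2m a0); first exact: pow2m_gt0.
move=> [[a b]|] //= h; rewrite leqNgt; apply/negP => ha.
have : pow2m a0 <= pow2m a by apply: pow2m_le; exact: ltnW.
by rewrite leNgt h.
Qed.

Lemma Fan_nbhs_None (V : set Fan) : nbhs (None : Fan) V ->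
  exists a0, forall a b, (a0 <= a)%N -> V (Some (a, b)).
Proof.
rewrite nbhsE => -[B [oB BN] BV]; have [e e0 he] := oB None BN.
have [m hm] := pow2m_small e0; exists m => a b ha; apply/BV/he => /=.
by apply: le_lt_trans hm; apply: pow2m_le.
Qed.

Lemma open_nbhs' (T : topologicalType) (A : set T) x : open A -> A x -> nbhs x A.
Proof. by move=> oA Ax; apply: open_nbhs_nbhs; split. Qed.

Lemma bool_nbhs (b : bool) (V : set bool) : V b -> nbhs b V.
Proof. by move=> h; apply/principal_filterP. Qed.

Lemma nat_nbhs (c : nat) (V : set nat) : V c -> nbhs c V.
Proof. by move=> h; apply/principal_filterP. Qed.

Lemma prod_nbhs_intro (c : nat) (q : Fan) (V : set (nat * Fan)) (W : set Fan) :
  nbhs q W -> (forall q', W q' -> V (c, q')) -> nbhs (c, q) V.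
Proof.
move=> hW hV; exists ([set c], W) => /=; first by split=> //; apply: nat_nbhs.
by move=> [c' q'] /= [-> ?]; apply: hV.
Qed.

Lemma prod_nbhs_elim (c : nat) (q : Fan) (V : set (nat * Fan)) :
  nbhs (c, q) V -> nbhs q (fun q' => V (c, q')).
Proof.
move=> [[A W] /= [hA hW] hAW]; apply: filterS hW => q' Wq'.
apply: (hAW (c, q')); split => //=; exact: nbhs_singleton hA.
Qed.

Lemma cont_tail (g : nat * Fan -> bool) : continuous g ->
  forall c, exists a0, forall a b, (a0 <= a)%N -> g (c, Some (a, b)) = g (c, None).
Proof.
move=> hg c; have := hg (c, None) [set g (c, None)] (bool_nbhs erefl).
by move=> /prod_nbhs_elim /Fan_nbhs_None.
Qed.

Lemma tail_cont (Y : topologicalType) (g : nat * Fan -> Y) :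
  (forall c, exists a0, forall a b, (a0 <= a)%N -> g (c, Some (a, b)) = g (c, None)) ->
  continuous g.
Proof.
move=> h [c q] V /= hV; have Vg := nbhs_singleton hV; move: hV Vg; case: q => [p|] hV Vg.
  apply: (@prod_nbhs_intro c (Some p) _ [set Some p]).
    by apply: open_nbhs'; [exact: Fan_pt_open|].
  by move=> q' /= ->.
have [a0 ha0] := h c.
apply: (@prod_nbhs_intro c None _ (Ftail a0)).
  by apply: open_nbhs'; [exact: Fan_tail_open|].
by move=> [[a b]|] //= ha; rewrite /= ha0.
Qed.

From mathcomp Require Import finmap.
Definition PNF : Type := (nat * Fan)%type.
HB.instance Definition _ := Topological.on PNF.
HB.instance Definition _ := isPointed.Build PNF (0%N, None).
Lemma cc (K : set (nat * Fan)) : compact K -> cover_compact (K : set PNF).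
Proof. by move=> h; rewrite -compact_cover. Qed.
Lemma cc' (K : set (nat * Fan)) : cover_compact (K : set PNF) -> compact K.
Proof. by move=> h; rewrite (compact_cover PNF). Qed.

Definition CO := {compact-open, (nat * Fan)%type -> bool}.

Lemma nat_near (P : nat -> Prop) : (\forall n \near \oo, P n) <-> exists N, forall n, (N <= n)%N -> P n.
Proof.
split=> [[N _ hN]|[N hN]]; first by exists N => n hn; apply: hN.
by exists N.
Qed.

Definition Wset (a0 : nat -> nat) (p : nat * Fan) : set (nat * Fan) :=
  match p with
  | (c, None) => [set p' | p'.1 = c /\ Ftail (a0 c) p'.2]
  | (c, Some q) => [set (c, Some q)]
  end.

Lemma Wset_open a0 p : open (Wset a0 p).
Proof.
rewrite openE; case: p => c [q|] [c' q'] /=.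
  move=> [-> ->]; apply: (@prod_nbhs_intro c (Some q) _ [set Some q]).
    by apply: open_nbhs'; [exact: Fan_pt_open|].
  by move=> q'' /= ->.
move=> [-> h]; apply: (@prod_nbhs_intro c q' _ (Ftail (a0 c))).
  by apply: open_nbhs'; [exact: Fan_tail_open|].
by move=> q'' hq.
Qed.

Lemma Wset_self a0 p : Wset a0 p p.
Proof. by case: p => c [q|]. Qed.

Lemma co_cvg (u : nat -> nat * Fan -> bool) (g : nat * Fan -> bool) :
  (forall p, \forall n \near \oo, u n p = g p) ->
  (forall c, exists a0, \forall n \near \oo, forall a b, (a0 <= a)%N ->
      u n (c, Some (a, b)) = g (c, Some (a, b))) ->
  ((u n : CO) @[n --> \oo]) --> (g : CO).
Proof.
move=> hP hU; apply/compact_open_cvgP => K O cK oO gKO.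
have [a0 ha0] := choice hU.
have hcov : K `<=` cover K (Wset a0).
  by move=> p Kp; exists p => //; exact: Wset_self.
have [D' sD' hD'] := @cc K cK _ K (Wset a0) (fun p _ => @Wset_open a0 p) hcov.
have hev : \forall n \near \oo, (\bigcap_(i in [set` D']) [set n | forall p', Wset a0 i p' -> u n p' = g p']) n.
  apply: filter_bigI => -[c [q|]] _.
    by apply: filterS (hP (c, Some q)) => n hn p' /= ->.
  apply: filterS (filterI (hP (c, None)) (ha0 c)) => n [h1 h2] [c' q'] /= [-> hq].
  by case: q' hq => [[a b]|] hq //=; apply: h2.
apply: filterS hev => n hn _ [p Kp <-].
have [i Di Wp] := hD' p Kp.
by rewrite (hn i Di p Wp); apply: gKO; exists p.
Qed.

Lemma bool_open (O : set bool) : open O.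
Proof. by rewrite openE => b hb; apply: bool_nbhs. Qed.

Lemma co_pt (u : nat -> nat * Fan -> bool) (g : nat * Fan -> bool) :
  ((u n : CO) @[n --> \oo]) --> (g : CO) ->
  forall p, \forall n \near \oo, u n p = g p.
Proof.
move=> /compact_open_cvgP h p.
have := h [set p] [set g p] (@compact_set1 _ p) (@bool_open _).
have hs : [set g x | x in [set p]] `<=` [set g p] by move=> _ [x /= -> <-].
move=> /(_ hs) [N _ hN]; exists N => // n /hN /= hf; apply: hf; by exists p.
Qed.

Lemma co_unif (u : nat -> nat * Fan -> bool) (g : nat * Fan -> bool) :
  continuous g -> ((u n : CO) @[n --> \oo]) --> (g : CO) ->
  forall c, exists a0, \forall n \near \oo, forall a b, (a0 <= a)%N ->
      u n (c, Some (a, b)) = g (c, None).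
Proof.
move=> hg hc c.
have [k0 hk0] := cont_tail hg c.
set v := g (c, None).
apply: contrapT => hneg.
have hbad : forall j, exists t : nat * (nat * nat),
    [/\ (j <= t.1)%N, (maxn k0 j <= t.2.1)%N & u t.1 (c, Some t.2) != v].
  move=> j; apply: contrapT => hj; apply: hneg; exists (maxn k0 j).
  apply/nat_near; exists j => n hn a b ha.
  have [//|hne] := eqVneq (u n (c, Some (a, b))) v.
  by exfalso; apply: hj; exists (n, (a, b)); split.
have [t ht] := choice hbad.
pose K : set (nat * Fan) := [set (c, None)] `|` [set (c, Some (t j).2) | j in setT].
have cK : compact K.
  apply: cc' => I D f fo Kcov.
  have [i0 Di0 fi0] := Kcov (c, None) (or_introl erefl).
  have := fo i0 Di0; rewrite openE => /(_ _ fi0) /prod_nbhs_elim /Fan_nbhs_None [A hA].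
  have hj : forall j, exists i, D i /\ f i (c, Some (t j).2).
    by move=> j; have [i Di fi] := Kcov (c, Some (t j).2) (or_intror (ex_intro2 _ _ j Logic.I erefl)); exists i.
  have [ij hij] := choice hj.
  exists (seq_fset tt (i0 :: map ij (iota 0 A))).
    move=> i; rewrite seq_fsetE inE => /orP [/eqP -> | /mapP [j _ ->]]; apply: mem_set => //.
    exact: (hij j).1.
  move=> p [-> | [j _ <-]].
    exists i0 => //; change (i0 \in seq_fset tt (i0 :: map ij (iota 0 A))).
    by rewrite seq_fsetE inE eqxx.
  case: (ltnP j A) => hjA.
    exists (ij j); last exact: (hij j).2.
    change (ij j \in seq_fset tt (i0 :: map ij (iota 0 A))).
    by rewrite seq_fsetE inE; apply/orP; right; apply/mapP; exists j => //; rewrite mem_iota.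
  exists i0.
    change (i0 \in seq_fset tt (i0 :: map ij (iota 0 A))).
    by rewrite seq_fsetE inE eqxx.
  case: (t j) (ht j) => n [a b] [/= _ ha _]; apply: hA.
  by apply: (leq_trans hjA); apply: leq_trans ha; exact: leq_maxr.
have gK : [set g x | x in K] `<=` [set v].
  move=> _ [p [-> | [j _ <-]] <-] //=.
  case: (t j) (ht j) => n [a b] [/= _ ha _]; apply: hk0.
  by apply: leq_trans ha; exact: leq_maxl.
have [N _ hN] := (proj1 (compact_open_cvgP _ _) hc) K [set v] cK (@bool_open _) gK.
have [h1 _ h3] := ht N.
have /= hf := hN (t N).1 h1.
have := hf (u (t N).1 (c, Some (t N).2)); rewrite /= => h.
have : u (t N).1 (c, Some (t N).2) = v by apply: h; exists (c, Some (t N).2) => //; right; exists N.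
by move/eqP; rewrite (negbTE h3).
Qed.

Section Generic.
Variables X Y : topologicalType.
Let ST := set_type (cont_maps X Y).
Let COXY := {compact-open, X -> Y}.

Lemma st_cvg (u : nat -> ST) (g : ST) :
  ((set_val (u n) : COXY) @[n --> \oo]) --> (set_val g : COXY) -> u @ \oo --> g.
Proof.
move=> h V; rewrite nbhsE => -[B [[A oA <-] Bg] BV].
have : nbhs (set_val g : COXY) A by apply: open_nbhs'.
move=> /h [N _ hN]; exists N => // n /hN; exact: BV.
Qed.

Lemma st_cvg_inv (u : nat -> ST) (g : ST) :
  u @ \oo --> g -> ((set_val (u n) : COXY) @[n --> \oo]) --> (set_val g : COXY).
Proof.
move=> h A; rewrite nbhsE => -[A' [oA' A'g] A'A].
have : nbhs g (set_val @^-1` A' : set ST).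
  apply: open_nbhs'; last exact: A'g.
  by exists A'.
move=> /h [N _ hN]; exists N => // n /hN; exact: A'A.
Qed.

Lemma cont_into_qcb (h : Mspace -> qcb_exp X Y) :
  (forall x (u : nat -> Mspace), u @ \oo --> x ->
     ((h (u n) : ST) @[n --> \oo]) --> (h x : ST)) ->
  continuous h.
Proof.
move=> H x V; rewrite nbhsE => -[B [oB Bhx] BV].
suff : nbhs x (h @^-1` B) by apply: filterS => y /BV.
apply: contrapT => hnb.
have hy : forall n, exists y : Mspace, Mdist x y < pow2m n /\ ~ B (h y).
  move=> n; apply: contrapT => hh; apply: hnb.
  apply: filterS (Mball_nbhs x (pow2m_gt0 n)) => y hy.
  by apply: contrapT => hB; apply: hh; exists y.
have [y hy'] := choice hy.
have yx : y @ \oo --> x.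
  apply/Mcvg => e e0; have [m hm] := pow2m_small e0.
  exists m => // n /= hn; apply: lt_trans (hy' n).1 _.
  by apply: le_lt_trans hm; apply: pow2m_le.
have := oB (h x) Bhx (fun n => h (y n)) (H x y yx).
move=> [N _ hN]; exact: (hy' N).2 (hN N (leqnn N)).
Qed.

Lemma cont_from_qcb (h : qcb_exp X Y -> Mspace) :
  (forall (g : ST) (u : nat -> ST), u @ \oo --> g ->
     forall e : R, 0 < e -> \forall n \near \oo, Mdist (h g) (h (u n)) < e) ->
  continuous h.
Proof.
move=> H g V; rewrite nbhsE => -[U [oU Uhg] UV].
rewrite nbhsE; exists (h @^-1` U); last by move=> y /UV.
split=> //; move=> g' Ug' u ug'.
have [e e0 he] := oU (h g') Ug'.
by apply: filterS (H g' u ug' e e0) => n /he.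
Qed.
End Generic.

Definition gbit (g : nat * Fan -> bool) (m a b : nat) : bool :=
  g (m.*2, Some (a, b)) != g (m.*2, None).
Definition cnt (g : nat * Fan -> bool) (i : nat) : nat :=
  \sum_(a < 2 ^ i) g ((i.*2).+1, Some (nat_of_ord a, 0%N)).
Definition cval (g : nat * Fan -> bool) (i : nat) : R := (cnt g i)%:R * pow2m i.
Definition okb (g : nat * Fan -> bool) (i : nat) : bool :=
  [forall m : 'I_i.+1, forall a : 'I_i.+1,
     gbit g m a i.+1 || (psum (cval g) a i.+1 < pow2m m)].
Definition ydec (g : nat * Fan -> bool) (i : nat) : R :=
  if okb g i then cval g i else 0.

Lemma cnt_le g i : (cnt g i <= 2 ^ i)%N.
Proof.
rewrite /cnt; apply: (@leq_trans (\sum_(a < 2 ^ i) 1)%N); last by rewrite sum1_card card_ord.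
by apply: leq_sum => a _; case: (g _).
Qed.

Lemma cval_Mi g i : Mi i (cval g i).
Proof. by exists (cnt g i); split; [exact: cnt_le|]. Qed.

Lemma cval_ge0 g i : 0 <= cval g i.
Proof. exact: Mi_ge0 (cval_Mi g i). Qed.

Lemma ydec_Mi g i : Mi i (ydec g i).
Proof. by rewrite /ydec; case: okb; [exact: cval_Mi|exact: Mi0]. Qed.

Lemma ydec_ge0 g i : 0 <= ydec g i.
Proof. exact: Mi_ge0 (ydec_Mi g i). Qed.

Lemma ydec_le g i : ydec g i <= cval g i.
Proof. by rewrite /ydec; case: okb => //; exact: cval_ge0. Qed.

Lemma ydec_tail g m A : (m <= A)%N ->
  (forall a b, (A <= a)%N -> ~~ gbit g m a b) ->
  forall a b, (A <= a)%N -> psum (ydec g) a b < pow2m m.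
Proof.
move=> hmA hg a b haA; elim: b => [|i IH].
  by rewrite /psum big_geq // pow2m_gt0.
case: (leqP a i) => hai; last first.
  by rewrite /psum big_geq ?pow2m_gt0.
rewrite (@psum_split _ a i i.+1) ?hai ?leqnSn // psum1.
rewrite {2}/ydec; case hok: (okb g i); last by rewrite addr0.
have hmi : (m < i.+1)%N by rewrite ltnS (leq_trans hmA) // (leq_trans haA).
have hai' : (a < i.+1)%N by rewrite ltnS.
move/forallP: hok => /(_ (Ordinal hmi)) /forallP /(_ (Ordinal hai')) /=.
rewrite (negbTE (hg a i.+1 haA)) /= => hlt.
apply: le_lt_trans hlt; rewrite [X in _ <= X](@psum_split _ a i i.+1) ?hai ?leqnSn // !psum1.
rewrite lerD2r /psum; apply: ler_sum => k _; exact: ydec_le.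
Qed.

Lemma ydec_Mset (g : nat * Fan -> bool) : continuous g -> Mset (ydec g).
Proof.
move=> hg; split; first exact: ydec_Mi.
have [A hA] := cont_tail hg 0%N.
have hb : forall a b, (A <= a)%N -> ~~ gbit g 0 a b.
  by move=> a b ha; rewrite /gbit /= (hA a b ha) eqxx.
have ht := ydec_tail (leq0n A) hb.
have habs : (fun i => `|ydec g i|) = ydec g.
  by apply: funext => i; rewrite ger0_norm // ydec_ge0.
rewrite /l1 /= habs; apply: (@series_cvg_ub _ (psum (ydec g) 0 A + pow2m 0)).
  exact: ydec_ge0.
move=> n; case: (leqP A n) => hAn.
  rewrite (@psum_split _ 0 A n) ?hAn //; apply: lerD => //; apply: ltW; exact: ht.
apply: (le_trans (psum_mono 0 (@ydec_ge0 g) (ltnW hAn))).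
by rewrite lerDl; apply: ltW; exact: pow2m_gt0.
Qed.

Definition eF (x : nat -> R) (p : nat * Fan) : bool :=
  match p with
  | (c, None) => false
  | (c, Some (a, b)) =>
      if odd c then ((a.+1)%:R * pow2m c./2 <= x c./2)
      else (pow2m c./2 <= psum x a b)
  end.

Lemma half_odd2 i : ((i.*2).+1)./2 = i.
Proof. by rewrite /= uphalf_double. Qed.

Lemma eF_oddE x i a b : eF x ((i.*2).+1, Some (a, b)) = ((a.+1)%:R * pow2m i <= x i).
Proof. by rewrite /= odd_double /= uphalf_double. Qed.

Lemma eF_evenE x m a b : eF x (m.*2, Some (a, b)) = (pow2m m <= psum x a b).
Proof. by rewrite /= odd_double doubleK. Qed.

Lemma Mset_l1 x : Mset x -> cvgn (series x).
Proof. by move=> h; have := h.2; rewrite /l1 /= Mset_abs. Qed.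

Lemma big_odd_false x i a : Mset x -> (2 ^ i <= a)%N ->
  ((a.+1)%:R * pow2m i <= x i) = false.
Proof.
move=> hx ha; apply/negbTE; rewrite -ltNge; apply: le_lt_trans (Mi_le1 (hx.1 i)) _.
rewrite /pow2m -natrX ltr_pdivlMr ?ltr0n ?expn_gt0 // mul1r ltr_nat ltnS //.
Qed.

Lemma parity c : (exists i, c = (i.*2).+1) \/ (exists m, c = m.*2).
Proof.
case hc: (odd c); [left|right]; exists c./2; rewrite -[LHS]odd_double_half hc //.
Qed.

Lemma eF_tail x : Mset x -> forall c, exists a0, forall a b, (a0 <= a)%N ->
  eF x (c, Some (a, b)) = false.
Proof.
move=> hx c; have [[i ->]|[m ->]] := parity c.
  exists (2 ^ i)%N => a b ha; rewrite eF_oddE; exact: big_odd_false.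
have [a0 ha0] := tail_small (@Mset_ge0 x ^~ hx) (Mset_l1 hx) (pow2m_gt0 m).
exists a0 => a b ha; rewrite eF_evenE; apply/negbTE; rewrite -ltNge.
apply: le_lt_trans (ha0 b); apply: psum_monol => //; exact: (@Mset_ge0 x ^~ hx).
Qed.

Lemma eF_cont x : Mset x -> continuous (eF x).
Proof.
move=> hx; apply: tail_cont => c; have [a0 h] := eF_tail hx c.
by exists a0 => a b ha; rewrite h.
Qed.

Lemma sum_lt j n : (\sum_(a < n) (a < j)%N)%N = minn j n.
Proof.
elim: n => [|n IH]; first by rewrite big_ord0 minn0.
rewrite big_ord_recr /= IH; case: (ltnP n j) => h.
  by rewrite addn1; lia.
by rewrite addn0; lia.
Qed.

Lemma cval_eF x : Mset x -> cval (eF x) = x.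
Proof.
move=> hx; apply: funext => i; have [j [hj hxi]] := hx.1 i.
have hxi' : x i = j%:R * pow2m i by rewrite hxi.
rewrite /cval /cnt.
have -> : (\sum_(a < 2 ^ i) eF x ((i.*2).+1, Some (nat_of_ord a, 0%N)))%N =
          (\sum_(a < 2 ^ i) (nat_of_ord a < j)%N)%N.
  apply: eq_bigr => a _; rewrite eF_oddE hxi' ler_pM2r ?pow2m_gt0 // ler_nat.
  by [].
by rewrite sum_lt (minn_idPl hj) hxi'.
Qed.

Lemma ydec_eF x : Mset x -> ydec (eF x) = x.
Proof.
move=> hx; apply: funext => i; rewrite /ydec.
suff -> : okb (eF x) i by rewrite cval_eF.
apply/forallP => m; apply/forallP => a; rewrite /gbit eF_evenE /= cval_eF //.
by case: leP.
Qed.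

Lemma l1dist_sym x y : l1dist x y = l1dist y x.
Proof.
have e : adiff x y = adiff y x by apply: funext => i; rewrite /adiff distrC.
by rewrite !l1distE e. Qed.

Lemma coord_ev (u : nat -> Mspace) (x : Mspace) : u @ \oo --> x ->
  forall b, \forall n \near \oo, forall l, (l <= b)%N -> set_val (u n) l = set_val x l.
Proof.
move=> /Mcvg h b; apply: filterS (h _ (pow2m_gt0 b)) => n hn l hl.
apply: Mi_sep; [exact: (@Mspace_Mset (u n)).1|exact: (@Mspace_Mset x).1|].
rewrite distrC; apply: le_lt_trans (@coord_le_dist _ _ l (@Mspace_l1 x) (@Mspace_l1 (u n))) _.
by apply: lt_le_trans hn _; apply: pow2m_le.
Qed.

Lemma pow2m_half m : pow2m m.+1 + pow2m m.+1 = pow2m m.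
Proof. by rewrite pow2mS; lra. Qed.

Lemma eF_cvg (u : nat -> Mspace) (x : Mspace) : u @ \oo --> x ->
  ((eF (set_val (u n)) : CO) @[n --> \oo]) --> (eF (set_val x) : CO).
Proof.
move=> ux; have hx := Mspace_Mset x.
apply: co_cvg.
  move=> [c [[a b]|]]; last by apply: nearW.
  have [[i ->]|[m ->]] := parity c.
    apply: filterS (coord_ev ux i) => n hn; rewrite !eF_oddE hn //.
  apply: filterS (coord_ev ux b) => n hn; rewrite !eF_evenE; congr (_ <= _).
  rewrite /psum !big_nat; apply: eq_bigr => l /andP[_ hl]; apply: hn; exact: ltnW.
move=> c; have [[i ->]|[m ->]] := parity c.
  exists (2 ^ i)%N; apply: nearW => n a b ha.
  rewrite !eF_oddE !big_odd_false //; exact: Mspace_Mset.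
have [a0 ha0] := tail_small (@Mset_ge0 _ ^~ hx) (Mset_l1 hx) (pow2m_gt0 m.+1).
exists a0; move/Mcvg: ux => /(_ _ (pow2m_gt0 m.+1)); apply: filterS => n hn a b ha.
have h1 : psum (set_val x) a b < pow2m m.+1.
  apply: le_lt_trans (ha0 b); apply: psum_monol => //; exact: (@Mset_ge0 _ ^~ hx).
have h2 := @window_le _ _ a b (@Mspace_l1 (u n)) (@Mspace_l1 x).
rewrite l1dist_sym in h2; have h3 := pow2m_half m.
have h4 := pow2m_gt0 m.+1.
rewrite !eF_evenE; apply/idP/idP => hh.
  rewrite /Mdist in hn; lra.
lra.
Qed.

Lemma near_all_lt (P : nat -> nat -> Prop) K :
  (forall k, (k < K)%N -> \forall n \near \oo, P k n) ->
  \forall n \near \oo, forall k, (k < K)%N -> P k n.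
Proof.
elim: K => [|K IH] h; first by apply: nearW.
have h1 := IH (fun k hk => h k (ltnW hk)).
apply: filterS (filterI h1 (h K (ltnSn K))) => n [hn1 hn2] k.
rewrite ltnS leq_eqVlt => /orP [/eqP -> //|hk]; exact: hn1.
Qed.

Lemma ydec_agree (g1 g2 : nat * Fan -> bool) A :
  (forall c a b, (c <= (A.*2).+1)%N -> (a <= 2 ^ A)%N -> (b <= A)%N ->
     g1 (c, Some (a, b)) = g2 (c, Some (a, b))) ->
  (forall c, (c <= (A.*2).+1)%N -> g1 (c, None) = g2 (c, None)) ->
  forall l, (l < A)%N -> ydec g1 l = ydec g2 l.
Proof.
move=> hS hN.
have hA : (A <= 2 ^ A)%N by apply: ltnW; apply: ltn_expl.
have hc : forall k, (k < A)%N -> cval g1 k = cval g2 k.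
  move=> k hk; rewrite /cval /cnt; congr (_%:R * _); apply: eq_bigr => a _.
  rewrite hS //.
    by rewrite ltnS leq_double ltnW.
  apply: ltnW; apply: (leq_trans (ltn_ord a)); apply: leq_pexp2l => //; exact: ltnW.
move=> l hl; rewrite /ydec.
have -> : okb g1 l = okb g2 l.
  apply: eq_forallb => m; apply: eq_forallb => a.
  have hm : (m <= l)%N by rewrite -ltnS.
  have ha : (a <= l)%N by rewrite -ltnS.
  congr (_ || _).
    rewrite /gbit hS ?hN //.
    - by apply: leqW; rewrite leq_double; apply: leq_trans hm (ltnW hl).
    - by apply: leqW; rewrite leq_double; apply: leq_trans hm (ltnW hl).
    - by apply: leq_trans hA; apply: leq_trans ha (ltnW hl).
  congr (_ < _); rewrite /psum !big_nat; apply: eq_bigr => k /andP[_ hk].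
  apply: hc; exact: leq_trans hk hl.
by rewrite hc.
Qed.

Lemma ydec_l1 g : continuous g -> l1 (ydec g).
Proof. by move=> hg; case: (ydec_Mset hg). Qed.

Lemma psum_abs_ydec g a b : psum (fun i => `|ydec g i|) a b = psum (ydec g) a b.
Proof. by rewrite /psum; apply: eq_bigr => i _; rewrite ger0_norm // ydec_ge0. Qed.

Lemma ydec_cvg (U : nat -> nat * Fan -> bool) (G : nat * Fan -> bool) :
  (forall n, continuous (U n)) -> continuous G ->
  ((U n : CO) @[n --> \oo]) --> (G : CO) ->
  forall e : R, 0 < e -> \forall n \near \oo, l1dist (ydec G) (ydec (U n)) < e.
Proof.
move=> hU hG h e e0.
have e20 : 0 < e / 2 by rewrite divr_gt0.
have [m hm] := pow2m_small e20.
have [a0G hG0] := cont_tail hG m.*2.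
have [a0U hU0] := co_unif hG h m.*2.
have hpt := co_pt h (m.*2, None).
pose A := maxn m (maxn a0G a0U).
have hmA : (m <= A)%N by apply: leq_maxl.
have hGA : (a0G <= A)%N by rewrite /A (leq_trans _ (leq_maxr _ _)) ?leq_maxl.
have hUA : (a0U <= A)%N by rewrite /A (leq_trans _ (leq_maxr _ _)) ?leq_maxr.
have hagS : \forall n \near \oo, forall c, (c < (A.*2).+2)%N -> forall a, (a < (2 ^ A).+1)%N ->
    forall b, (b < A.+1)%N -> U n (c, Some (a, b)) = G (c, Some (a, b)).
  apply: near_all_lt => c _; apply: near_all_lt => a _; apply: near_all_lt => b _.
  exact: co_pt h _.
have hagN : \forall n \near \oo, forall c, (c < (A.*2).+2)%N -> U n (c, None) = G (c, None).
  apply: near_all_lt => c _; exact: co_pt h _.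
apply: filterS (filterI (filterI hagS hagN) (filterI hU0 hpt)) => n [[hS hN] [hu hp]].
have heq : forall l, (l < A)%N -> ydec G l = ydec (U n) l.
  by apply: ydec_agree => [c a b hc ha hb|c hc]; rewrite (hS, hN) //.
have tG : forall a b, (A <= a)%N -> psum (ydec G) a b < pow2m m.
  apply: ydec_tail => // a b ha; rewrite /gbit hG0 ?eqxx //; exact: leq_trans ha.
have tU : forall a b, (A <= a)%N -> psum (ydec (U n)) a b < pow2m m.
  apply: ydec_tail => // a b ha; rewrite /gbit hu ?hp ?eqxx //; exact: leq_trans ha.
have := @l1dist_split (ydec G) (ydec (U n)) A (pow2m m) (ydec_l1 hG) (ydec_l1 (hU n)) heq.
have tG' : forall b, psum (fun i => `|ydec G i|) A b <= pow2m m.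
  by move=> b; rewrite psum_abs_ydec; exact: ltW (tG A b (leqnn A)).
have tU' : forall b, psum (fun i => `|ydec (U n) i|) A b <= pow2m m.
  by move=> b; rewrite psum_abs_ydec; exact: ltW (tU A b (leqnn A)).
move=> /(_ tG' tU'); lra.
Qed.

Definition eM (x : Mspace) : qcb_exp (nat * Fan)%type bool :=
  exist (fun f => f \in cont_maps (nat * Fan)%type bool) (eF (set_val x))
    (mem_set (eF_cont (@Mspace_Mset x))).

Lemma cont_of_qcb (g : qcb_exp (nat * Fan)%type bool) : continuous (sval g : nat * Fan -> bool).
Proof. exact: set_mem (valP g). Qed.

Definition rM (g : qcb_exp (nat * Fan)%type bool) : Mspace :=
  exist (fun y => y \in Mset) (ydec (sval g)) (mem_set (ydec_Mset (@cont_of_qcb g))).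

Lemma eM_cont : continuous eM.
Proof.
apply: cont_into_qcb => x u ux; apply: st_cvg; exact: eF_cvg.
Qed.

Lemma rM_cont : continuous rM.
Proof.
apply: cont_from_qcb => g u ug e e0.
have h := st_cvg_inv ug.
exact: (@ydec_cvg (fun n => sval (u n)) (sval g) (fun n => @cont_of_qcb (u n)) (@cont_of_qcb g) h e e0).
Qed.

Lemma rM_eM x : rM (eM x) = x.
Proof. by apply: val_inj => /=; apply: ydec_eF; exact: Mspace_Mset. Qed.

Lemma retract1 : retract Mspace (qcb_exp (nat * Fan)%type bool).
Proof. by exists eM, rM; split; [exact: eM_cont|exact: rM_cont|exact: rM_eM]. Qed.

Lemma co_comp (X1 X2 Y1 Y2 : topologicalType) (phi : X2 -> X1) (psi : Y1 -> Y2)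
  (U : nat -> X1 -> Y1) (G : X1 -> Y1) : continuous phi -> continuous psi ->
  ((U n : {compact-open, X1 -> Y1}) @[n --> \oo]) --> (G : {compact-open, X1 -> Y1}) ->
  ((psi \o U n \o phi : {compact-open, X2 -> Y2}) @[n --> \oo]) -->
     (psi \o G \o phi : {compact-open, X2 -> Y2}).
Proof.
move=> hphi hpsi /compact_open_cvgP h; apply/compact_open_cvgP => K O cK oO sub.
have cK1 : compact (phi @` K) by apply: continuous_compact => //; exact: continuous_subspaceT.
have oO1 : open (psi @^-1` O) by move/continuousP: hpsi; apply.
have sub1 : G @` (phi @` K) `<=` psi @^-1` O.
  by move=> _ [_ [k Kk <-] <-]; apply: sub; exists k.
have [N _ hN] := h _ _ cK1 oO1 sub1.
exists N => // n /hN /= hn _ [k Kk <-]; apply: hn; exists (phi k) => //; exists k.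
Qed.

Lemma cont_nat (Y : topologicalType) (f : nat -> Y) : continuous f.
Proof. by move=> c V hV; apply: nat_nbhs; exact: nbhs_singleton hV. Qed.

Lemma cont_bool (Y : topologicalType) (f : bool -> Y) : continuous f.
Proof. by move=> c V hV; apply: bool_nbhs; exact: nbhs_singleton hV. Qed.

Definition iota_F (p : nat * Fan) : BaireSpace := fun t =>
  match p, t with
  | (c, _), 0%N => c
  | (_, None), _.+1 => 0%N
  | (_, Some (a, b)), t'.+1 => if t' == a then b.+1 else 0%N
  end.

Definition dec (al : BaireSpace) : nat * Fan :=
  (al 0%N, match pselect (exists j, (fun j => al j.+1 != 0%N) j) with
    | left h => Some (ex_minn h, (al (ex_minn h).+1).-1)
    | right _ => None
    end).

Lemma dec_iota p : dec (iota_F p) = p.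
Proof.
case: p => c [[a b]|]; rewrite /dec /=; case: pselect => [h|h] //.
- case: ex_minnP => m hm _; move: hm => /=.
  by have [-> //|hma] := eqVneq m a; rewrite eqxx.
- by exfalso; apply: h; exists a => /=; rewrite eqxx.
- by exfalso; case: h.
Qed.

Lemma iota_cont : continuous iota_F.
Proof.
move=> p; apply/pointwise_cvgP => t.
have : continuous (fun q => iota_F q t).
  apply: tail_cont => c; exists t => a b ha; case: t ha => //= t' ha.
  by case: eqP => // e; move: ha; rewrite e ltnn.
by move=> /(_ p).
Qed.

Lemma agree_nbhs (al : BaireSpace) K :
  nbhs al [set be : BaireSpace | forall j, (j <= K)%N -> be j = al j].
Proof.
have h1 : forall t, nbhs al [set be : BaireSpace | be t = al t].
  move=> t; have hc : {ptws, nbhs al --> al} by [].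
  have := (proj1 (pointwise_cvgP al _) hc) t [set al t] (nat_nbhs erefl).
  move=> hh; exact: hh _.
elim: K => [|K IH].
  by apply: filterS (h1 0%N) => be hb j; rewrite leqn0 => /eqP ->.
apply: filterS (filterI IH (h1 K.+1)) => be [hb1 hb2] j.
by rewrite leq_eqVlt => /orP [/eqP -> //|]; rewrite ltnS; apply: hb1.
Qed.

Lemma decP (al : BaireSpace) :
  (dec al = (al 0%N, None) /\ forall j, al j.+1 = 0%N) \/
  (exists j, [/\ dec al = (al 0%N, Some (j, (al j.+1).-1)), al j.+1 != 0%N &
       forall k, (k < j)%N -> al k.+1 = 0%N]).
Proof.
rewrite /dec; case: pselect => h; [right|left].
  case: ex_minnP => m hm hmin; exists m; split => // k hk.
  case: (eqVneq (al k.+1) 0%N) => // hk0.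
  by have := hmin k hk0; rewrite leqNgt hk.
split => // j; case: (eqVneq (al j.+1) 0%N) => // hj.
by exfalso; apply: h; exists j.
Qed.

Lemma dec_cont : continuous dec.
Proof.
move=> al V hV; have [[dE hz]|[j [dE hj hmin]]] := decP al.
  rewrite dE in hV; have [a0 ha0] := Fan_nbhs_None (prod_nbhs_elim hV).
  have hVN := nbhs_singleton hV.
  apply: filterS (agree_nbhs al a0) => be hbe /=.
  have [[dE' _]|[j' [dE' hj' _]]] := decP be; rewrite dE' (hbe 0%N (leq0n _)) //.
  apply: ha0; rewrite leqNgt; apply/negP => hja.
  by move: hj'; rewrite (hbe j'.+1 hja) hz eqxx.
rewrite dE in hV; have hVS := nbhs_singleton hV.
apply: filterS (agree_nbhs al j.+1) => be hbe /=.
have [[dE' hz']|[j' [dE' hj' hmin']]] := decP be.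
  by move: hj; rewrite -(hbe j.+1 (leqnn _)) hz' eqxx.
have hjj : j' = j.
  case: (ltngtP j' j) => // hlt.
    by move: hj'; rewrite (hbe j'.+1 (ltnW hlt)) (hmin j' hlt) eqxx.
  by move: hj; rewrite -(hbe j.+1 (leqnn _)) (hmin' j hlt) eqxx.
by rewrite dE' hjj (hbe 0%N (leq0n _)) (hbe j.+1 (leqnn _)).
Qed.

Definition eBf (x : Mspace) : BaireSpace -> nat :=
  fun al => nat_of_bool (eF (set_val x) (dec al)).

Lemma eBf_cont x : continuous (eBf x).
Proof.
move=> al; apply: (@continuous_comp _ _ _ dec (fun p => nat_of_bool (eF (set_val x) p))).
  exact: dec_cont.
apply: (@continuous_comp _ _ _ (eF (set_val x)) nat_of_bool).
  exact: (eF_cont (@Mspace_Mset x)).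
exact: cont_bool.
Qed.

Definition eB (x : Mspace) : qcb_exp BaireSpace nat :=
  exist (fun f => f \in cont_maps BaireSpace nat) (eBf x) (mem_set (@eBf_cont x)).

Lemma cont_of_qcbB (g : qcb_exp BaireSpace nat) : continuous (sval g : BaireSpace -> nat).
Proof. exact: set_mem (valP g). Qed.

Definition gB (g : qcb_exp BaireSpace nat) : nat * Fan -> bool :=
  fun p => sval g (iota_F p) != 0%N.

Lemma gB_cont g : continuous (gB g).
Proof.
move=> p; apply: (@continuous_comp _ _ _ iota_F (fun al => sval g al != 0%N)).
  exact: iota_cont.
apply: (@continuous_comp _ _ _ (sval g : BaireSpace -> nat) (fun n => n != 0%N)).
  exact: (@cont_of_qcbB g).
exact: cont_nat.
Qed.

Definition rB (g : qcb_exp BaireSpace nat) : Mspace :=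
  exist (fun y => y \in Mset) (ydec (gB g)) (mem_set (ydec_Mset (@gB_cont g))).

Lemma eB_cont : continuous eB.
Proof.
apply: cont_into_qcb => x u ux; apply: st_cvg.
exact: (@co_comp _ _ _ _ dec nat_of_bool _ _ dec_cont (@cont_bool _ _) (eF_cvg ux)).
Qed.

Lemma rB_cont : continuous rB.
Proof.
apply: cont_from_qcb => g u ug e e0.
have h := st_cvg_inv ug.
have h2 := (@co_comp _ _ _ _ iota_F (fun n => n != 0%N) _ _ iota_cont (@cont_nat _ _) h).
exact: (@ydec_cvg (fun n => gB (u n)) (gB g) (fun n => @gB_cont (u n)) (@gB_cont g) h2 e e0).
Qed.

Lemma rB_eB x : rB (eB x) = x.
Proof.
apply: val_inj => /=.
have -> : gB (eB x) = eF (set_val x).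
  by apply: funext => p; rewrite /gB /= /eBf dec_iota; case: (eF _ _).
apply: ydec_eF; exact: Mspace_Mset.
Qed.

Lemma retract2 : retract Mspace (qcb_exp BaireSpace nat).
Proof. by exists eB, rB; split; [exact: eB_cont|exact: rB_cont|exact: rB_eB]. Qed.

Theorem proposition3p7 :
  retract Mspace (qcb_exp (nat * Fan)%type bool) /\
  retract Mspace (qcb_exp BaireSpace nat).
Proof. split; [exact: retract1|exact: retract2]. Qed.
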